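(* Let $T$ be a regular tournament of order $2n+1$, let $S\subseteq V(T)$ with $k=|S|$, and let $x,y$ be two distinct vertices in $V(T)\setminus S$. Then: (i) If $n\geq 3$ and $k\leq \frac{1}{3}(n-1)$, then $T-S$ contains an $(x,y)$-path of length $3$, unless $T$ is isomorphic to a tournament from $\mathcal G$. (ii) If $n\geq 5$, $k\leq \frac{1}{2}n$, and $T-S$ contains no $(x,y)$-path of length $3$, then $T-S$ contains an $(x,y)$-path of length $4$.
   Context: A tournament is regular if every vertex has outdegree equal to indegree. $T-S$ is the subtournament induced by $V(T)\setminus S$. Paths are directed and simple; length = number of arcs. The family $\mathcal G$ consists of the regular tournaments of order $6k+3\geq 9$ whose vertex set is partitioned as $\{x,y,z\}\cup A\cup B\cup C\cup S$ with $|A|=|C|=2k-1$, $|B|=k+2$, $|S|=k$, such that the subtournaments induced by $A$, by $C$ and by $\{z\}\cup B\cup S$ are regular, and (writing $X\to Y$ for ''every vertex of $X$ dominates every vertex of $Y$'') $A\to B\cup S$, $B\cup S\to C$, $C\to A$, $C\to z$, $z\to A$, $x\to \{y,z\}\cup A\cup S$, $\{x,z\}\cup C\cup S\to y$, $y\to A\cup B$, and $B\cup C\to x$. *)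

(* Defs.v *)
From mathcomp Require Import all_boot.
Set Implicit Arguments. Unset Strict Implicit. Unset Printing Implicit Defensive.

(* A tournament on a finite vertex type V is given by its arc relation T:
   T u v means "u dominates v" (arc u -> v). *)
Definition tournament (V : finType) (T : rel V) : Prop :=
  (forall u v, T u v -> ~~ T v u) /\ (forall u v, u != v -> T u v || T v u).

Definition outdeg (V : finType) (T : rel V) (v : V) := #|[set w | T v w]|.
Definition indeg (V : finType) (T : rel V) (v : V) := #|[set w | T w v]|.

Definition regular (V : finType) (T : rel V) : Prop :=
  forall v, outdeg T v = indeg T v.

Definition regular_on (V : finType) (T : rel V) (X : {set V}) : Prop :=
  forall v, v \in X -> #|[set w in X | T v w]| = #|[set w in X | T w v]|.

Definition dom (V : finType) (T : rel V) (X Y : {set V}) : Prop :=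
  forall u v, u \in X -> v \in Y -> T u v.

Definition path3 (V : finType) (T : rel V) (S : {set V}) (x y : V) : Prop :=
  exists a b, [/\ uniq [:: x; a; b; y], [&& x \notin S, a \notin S, b \notin S & y \notin S],
                  T x a, T a b & T b y].

Definition path4 (V : finType) (T : rel V) (S : {set V}) (x y : V) : Prop :=
  exists a b c, [/\ uniq [:: x; a; b; c; y],
                    [&& x \notin S, a \notin S, b \notin S, c \notin S & y \notin S],
                    T x a, T a b & [/\ T b c & T c y]].

Definition inG (V : finType) (T : rel V) (x y : V) (S : {set V}) : Prop :=
  exists (z : V) (A B C : {set V}) (k : nat),
  [/\ tournament T /\ regular T, 1 <= k /\ #|V| = 6 * k + 3,
      [/\ uniq [:: x; y; z],
          ([disjoint [set x; y; z] & A :|: B :|: C :|: S]),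
          [/\ ([disjoint A & B :|: C :|: S]), ([disjoint B & C :|: S]) & ([disjoint C & S])]
          & [set x; y; z] :|: A :|: B :|: C :|: S = setT],
      [/\ #|A| = (2 * k).-1, #|C| = (2 * k).-1, #|B| = k + 2 & #|S| = k] /\
      [/\ regular_on T A, regular_on T C & regular_on T (z |: (B :|: S))] &
      [/\ dom T A (B :|: S), dom T (B :|: S) C, dom T C A, dom T C [set z] &
          [/\ dom T [set z] A,
              dom T [set x] ([set y; z] :|: A :|: S),
              dom T ([set x; z] :|: C :|: S) [set y],
              dom T [set y] (A :|: B) &
              dom T (B :|: C) [set x]]]].

Definition isoG (V : finType) (T : rel V) (x y : V) (S : {set V}) : Prop :=
  exists (V' : finType) (T' : rel V') (x' y' : V') (S' : {set V'}) (f : V -> V'),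
  [/\ bijective f, (forall u v, T' (f u) (f v) = T u v),
      [/\ f x = x', f y = y' & S' = f @: S] & inG T' x' y' S'].

(* Main.v *)
Require Import Defs.
From mathcomp Require Import all_boot.
From mathcomp Require Import zify.
From Stdlib Require Import Classical.
Set Warnings "-notation-overridden".
Set Implicit Arguments. Unset Strict Implicit. Unset Printing Implicit Defensive.


Lemma disjU (V : finType) (A B : {set V}) : [disjoint A & B] -> #|A :|: B| = #|A| + #|B|.
Proof. by move=> d; rewrite cardsU (disjoint_setI0 d) cards0 subn0. Qed.

Lemma mkdisj (V : finType) (A B : {set V}) : (forall v, v \in A -> v \in B -> False) -> [disjoint A & B].
Proof. move=> h; rewrite -setI_eq0; apply/eqP/setP=> v; rewrite !inE; apply/negbTE/negP => /andP[a b]; exact: h a b. Qed.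

Lemma tour_irr (V : finType) (T : rel V) u : tournament T -> T u u = false.
Proof. by case=> a _; apply/negP => h; move: (a _ _ h); rewrite h. Qed.

Lemma tour_flip (V : finType) (T : rel V) : tournament T -> tournament (fun a b => T b a).
Proof. case=> a t; split=> u v. by apply: a. by move=> /t; rewrite orbC. Qed.

Lemma tour_nT (V : finType) (T : rel V) u v : tournament T -> u != v -> ~~ T u v -> T v u.
Proof. by case=> _ t /t; case: (T u v). Qed.

Lemma split_in_out (V : finType) (T : rel V) (W : {set V}) v : tournament T ->
  #|[set w in W | T v w]| + #|[set w in W | T w v]| = #|W :\ v|.
Proof.
move=> tT; rewrite -disjU.
  congr (#|pred_of_set _|); apply/setP=> w; rewrite !inE.
  case: (eqVneq w v) => [->|nwv] /=;  first by rewrite (tour_irr _ tT) andbF.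
  case: (w \in W); rewrite ?andbF //=.
  by case/orP: (tT.2 _ _ nwv) => ->; rewrite ?orbT.
apply/mkdisj=> w; rewrite !inE => /andP[_ h1] /andP[_ h2].
by move: (tT.1 _ _ h1); rewrite h2.
Qed.

Lemma deg_n (V : finType) (T : rel V) n v : tournament T -> regular T -> #|V| = 2 * n + 1 ->
  #|[set w | T v w]| = n /\ #|[set w | T w v]| = n.
Proof.
move=> tT rT cV.
have := split_in_out setT v tT.
have e1 : [set w in setT | T v w] = [set w | T v w] by apply/setP=> w; rewrite !inE.
have e2 : [set w in setT | T w v] = [set w | T w v] by apply/setP=> w; rewrite !inE.
rewrite e1 e2.
have := cardsD1 v setT; rewrite inE cardsT cV.
have := rT v; rewrite /outdeg /indeg => ->.
lia.
Qed.

Lemma card_in_sum (V : finType) (T : rel V) (W : {set V}) p :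
  #|[set q in W | T q p]| = \sum_(q in W) (T q p : nat).
Proof.
rewrite -sum1_card big_mkcond /= [RHS]big_mkcond /=.
apply: eq_bigr => q _; rewrite !inE; by case: (q \in W); case: (T q p).
Qed.

Lemma tour_sum (V : finType) (T : rel V) (P : {set V}) : tournament T ->
  (\sum_(p in P) #|[set q in P | T q p]|).*2 = #|P| * #|P| - #|P|.
Proof.
move=> tT.
rewrite -addnn.
have -> : \sum_(p in P) #|[set q in P | T q p]| = \sum_(p in P) \sum_(q in P) (T q p : nat).
  by apply: eq_bigr => p _; rewrite card_in_sum.
rewrite {2}exchange_big /= -big_split /=.
have -> : \sum_(i in P) (\sum_(q in P) (T q i : nat) + \sum_(j in P) (T i j : nat))
   = \sum_(i in P) #|P :\ i|.
  apply: eq_bigr => i iP; rewrite -big_split /=.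
  rewrite -(split_in_out P i tT) !card_in_sum.
  rewrite addnC.
  have -> : #|[set w in P | T i w]| = \sum_(q in P) (T i q : nat).
    by rewrite -sum1_card big_mkcond /= [RHS]big_mkcond /=; apply: eq_bigr => q _; rewrite !inE; case: (q \in P); case: (T i q).
  by rewrite big_split /= addnC.
have -> : \sum_(i in P) #|P :\ i| = \sum_(i in P) (#|P| - 1).
  by apply: eq_bigr => i iP; rewrite (cardsD1 i P) iP; lia.
rewrite sum_nat_const mulnBr muln1 //.
Qed.

Lemma avg_in (V : finType) (T : rel V) (P : {set V}) : tournament T -> 0 < #|P| ->
  exists2 p, p \in P & #|P| <= (#|[set q in P | T q p]|).*2.+1.
Proof.
move=> tT P0.
case: (boolP [exists p in P, #|P| <= (#|[set q in P | T q p]|).*2.+1]) => [/exists_inP[p ? ?]|/exists_inPn h].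
  by exists p.
have : \sum_(p in P) (#|[set q in P | T q p]|).*2.+2 <= \sum_(p in P) #|P|.
  by apply: leq_sum => p /h; rewrite -ltnNge.
rewrite sum_nat_const.
have -> : \sum_(p in P) (#|[set q in P | T q p]|).*2.+2 = (\sum_(p in P) #|[set q in P | T q p]|) * 2 + \sum_(p in P) 2.
  by rewrite big_distrl -big_split /=; apply: eq_bigr => p _; lia.
have := tour_sum P tT; rewrite sum_nat_const.
lia.
Qed.

Lemma avg_out (V : finType) (T : rel V) (P : {set V}) : tournament T -> 0 < #|P| ->
  exists2 p, p \in P & #|P| <= (#|[set q in P | T p q]|).*2.+1.
Proof. move=> tT P0; exact: (avg_in (tour_flip tT) P0). Qed.

Lemma tight_in (V : finType) (T : rel V) (P : {set V}) m : tournament T -> #|P| = 2 * m + 1 ->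
  (forall p, p \in P -> #|[set q in P | T q p]| <= m) ->
  forall p, p \in P -> #|[set q in P | T q p]| = m.
Proof.
move=> tT cP hle.
have hs := tour_sum P tT.
have e : \sum_(p in P) (m - #|[set q in P | T q p]|) = 0.
  rewrite sumnB // sum_nat_const.
  move: hs; rewrite cP; set s := \sum_(_ in _) _ => hs.
  have -> : s = (2 * m + 1) * m by nia.
  lia.
move/eqP: e; rewrite sum_nat_eq0 => /forall_inP h p pP.
have := h p pP; have := hle p pP; lia.
Qed.

Lemma tight_out (V : finType) (T : rel V) (P : {set V}) m : tournament T -> #|P| = 2 * m + 1 ->
  (forall p, p \in P -> #|[set q in P | T p q]| <= m) ->
  forall p, p \in P -> #|[set q in P | T p q]| = m.
Proof. move=> tT; exact: (tight_in (tour_flip tT)). Qed.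

Lemma count_in (V : finType) (T : rel V) (x y p : V) (Y M P : {set V}) :
  tournament T -> x != y -> T x p -> T y p ->
  x \notin Y -> y \notin Y -> x \notin M -> y \notin M -> x \notin P -> y \notin P ->
  [disjoint Y & M] -> [disjoint Y & P] -> [disjoint M & P] ->
  (forall c, c \in Y -> T c p) -> (forall b, b \in M -> T b p) ->
  ([set x; y] :|: Y :|: M :|: [set q in P | T q p]) \subset [set w | T w p] /\
  #|[set x; y] :|: Y :|: M :|: [set q in P | T q p]| = 2 + #|Y| + #|M| + #|[set q in P | T q p]|.
Proof.
move=> tT nxy Txp Typ xY yY xM yM xP yP dYM dYP dMP hY hM; split.
  apply/subsetP=> w; rewrite !inE -!orbA.
  by move/orP=>[/eqP->//|/orP[/eqP->//|/orP[/hY//|/orP[/hM//|/andP[_ ->]]]]].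
rewrite disjU; last first.
  apply/mkdisj=> v; rewrite !inE -!orbA => /or4P[/eqP->|/eqP->|vY|vM] /andP[vP _].
  - by rewrite vP in xP.
  - by rewrite vP in yP.
  - by move: dYP => /disjointFr /(_ vY); rewrite vP.
  - by move: dMP => /disjointFr /(_ vM); rewrite vP.
rewrite disjU; last first.
  apply/mkdisj=> v; rewrite !inE -!orbA => /or3P[/eqP->|/eqP->|vY] vM.
  - by rewrite vM in xM.
  - by rewrite vM in yM.
  - by move: dYM => /disjointFr /(_ vY); rewrite vM.
rewrite disjU; last first.
  apply/mkdisj=> v; rewrite !inE => /orP[/eqP->|/eqP->] vY.
  - by rewrite vY in xY.
  - by rewrite vY in yY.
by rewrite cards2 nxy.
Qed.


Lemma partii (V : finType) (T : rel V) (n : nat) (S : {set V}) (x y : V) :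
  tournament T -> regular T -> #|V| = 2 * n + 1 ->
  x \notin S -> y \notin S -> x != y ->
  5 <= n -> 2 * #|S| <= n -> ~ path3 T S x y -> path4 T S x y.
Proof.
move=> tT rT cV xS yS nxy n5 hk np3.
case: (classic (path4 T S x y)) => // np4; exfalso.
have nyx : y != x by rewrite eq_sym.
have deg := deg_n _ tT rT cV.
pose U := [set v | [&& v \notin S, v != x & v != y]].
pose X := [set v in U | T x v].
pose Y := [set v in U | T v y].
have mU v : v \in U = [&& v \notin S, v != x & v != y] by rewrite inE.
have mX v : v \in X = [&& v \notin S, v != x, v != y & T x v] by rewrite !inE -!andbA.
have mY v : v \in Y = [&& v \notin S, v != x, v != y & T v y] by rewrite !inE -!andbA.
have np3' a c : a \in X -> c \in Y -> a != c -> T c a.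
  rewrite mX mY => /and4P[aS ax ay Txa] /and4P[cS cx cy Tcy] ac.
  apply: (tour_nT tT ac); apply/negP => Tac; apply: np3; exists a, c; split => //.
    by rewrite /= !inE !negb_or !(eq_sym x) ax cx nyx ac ay cy.
  by rewrite xS aS cS yS.
pose M := U :\: (X :|: Y).
pose M1 := [set b in M | [forall a in X, ~~ T a b]].
pose M2 := M :\: M1.
have mM b : b \in M = [&& b \notin S, b != x, b != y, ~~ T x b & ~~ T b y].
  by rewrite !inE; case: (b \in S); case: (b == x); case: (b == y); case: (T x b); case: (T b y).
have hM1 b a : b \in M1 -> a \in X -> T b a.
  rewrite inE => /andP[bM /forall_inP h] aX; apply: (tour_nT tT _ (h a aX)).
  by apply/eqP => ab; move: bM; rewrite mM -ab => /and5P[_ _ _ /negP nT _]; apply: nT; move: aX; rewrite mX => /and4P[].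
have hM2 b c : b \in M2 -> c \in Y -> T c b.
  rewrite in_setD => /andP[nbM1 bM'] cY.
  move: nbM1; rewrite in_set bM' /= negb_forall_in => /exists_inP[a aX]; rewrite negbK => Tab.
  move: bM'; rewrite mM => /and5P[bS bx byy nTxb nTby].
  have cb : b != c by apply/eqP => cb; move: cY; rewrite mY -cb (negbTE nTby) !andbF.
  apply: (tour_nT tT cb); apply/negP => Tbc.
  case: (eqVneq a c) => [ac|ac].
    by move: (tT.1 _ _ Tab); rewrite ac Tbc.
  move: aX cY; rewrite mX mY => /and4P[aS ax ay Txa] /and4P[cS cx cy Tcy].
  apply: np4; exists a, b, c; split => //.
    have ab : a != b by apply/eqP => ab; move: nTxb; rewrite -ab Txa.
    by rewrite /= !inE !negb_or !(eq_sym x) ax bx cx nyx ab ac ay cb byy cy.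
  by rewrite xS aS bS cS yS.
have I1 : #|X :&: Y| <= 1.
  apply/card_le1_eqP => u v; rewrite !in_setI => /andP[uX uY] /andP[vX vY].
  case: (eqVneq u v) => // uv; exfalso.
  have h1 := np3' u v uX vY uv.
  have h2 := np3' v u vX uY (negbT (introF eqP (fun e => (negP uv) (introT eqP (esym e))))).
  by move: (tT.1 _ _ h1); rewrite h2.
have cU : #|U| + #|S| + 2 = 2 * n + 1.
  rewrite -cV -cardsT.
  have -> : [set: V] = (U :|: S) :|: [set x; y].
    apply/setP => v; rewrite !inE.
    by case: (v \in S); case: (eqVneq v x); case: (eqVneq v y).
  rewrite disjU; last first.
    apply/mkdisj => v; rewrite !inE => /orP[/and3P[_ vx vy]|vS] /orP[/eqP e|/eqP e]; subst v.
    - by rewrite eqxx in vx.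
    - by rewrite eqxx in vy.
    - by rewrite vS in xS.
    - by rewrite vS in yS.
  rewrite disjU; last first.
    by apply/mkdisj => v; rewrite !inE => /and3P[vS _ _]; rewrite (negbTE vS).
  by rewrite cards2 nxy.
have cardU_le (A B : {set V}) : #|A :|: B| <= #|A| + #|B| by rewrite cardsU; lia.
have cX : n <= #|X| + #|S| + 1.
  rewrite -{1}(deg x).1.
  apply: (leq_trans (subset_leq_card (_ : _ \subset X :|: S :|: [set y]))).
    apply/subsetP => v; rewrite !inE => Txv.
    case: (eqVneq v y) => vy; first by rewrite orbT.
    case: (eqVneq v x) => vx; first by subst v; rewrite tour_irr in Txv.
    by case: (v \in S); rewrite ?orbT //= Txv.
  by apply: (leq_trans (cardU_le _ _)); rewrite cards1 leq_add2r cardU_le.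
have cY : n <= #|Y| + #|S| + 1.
  rewrite -{1}(deg y).2.
  apply: (leq_trans (subset_leq_card (_ : _ \subset Y :|: S :|: [set x]))).
    apply/subsetP => v; rewrite !inE => Tvy.
    case: (eqVneq v x) => vx; first by rewrite orbT.
    case: (eqVneq v y) => vy; first by subst v; rewrite tour_irr in Tvy.
    by case: (v \in S); rewrite ?orbT //= Tvy.
  by apply: (leq_trans (cardU_le _ _)); rewrite cards1 leq_add2r cardU_le.
have cXY := cardsUI X Y.
have XYU : X :|: Y \subset U.
  by apply/subsetP => v; rewrite !inE => /orP[/andP[-> _]|/andP[-> _]].
have cM : #|M| + #|X :|: Y| = #|U|.
  by rewrite -(cardsID (X :|: Y) U) (setIidPr XYU) addnC.
have cM12 : #|M1| + #|M2| = #|M|.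
  have M1M : M1 \subset M by apply/subsetP => v; rewrite inE => /andP[].
  by rewrite -(cardsID M1 M) (setIidPr M1M).
pose P := X :\: Y. pose Q := Y :\: X.
have cP : #|X :&: Y| + #|P| = #|X| by rewrite cardsID.
have cQ : #|X :&: Y| + #|Q| = #|Y| by rewrite setIC cardsID.
have P0 : 0 < #|P| by lia.
have Q0 : 0 < #|Q| by lia.
have mP v : v \in P = (v \in X) && (v \notin Y) by rewrite in_setD andbC.
have mQ v : v \in Q = (v \in Y) && (v \notin X) by rewrite in_setD andbC.
have M1M v : v \in M1 -> v \in M by rewrite inE => /andP[].
have M2M v : v \in M2 -> v \in M by rewrite in_setD => /andP[].
have xX : x \notin X by rewrite mX eqxx /= !andbF.
have yX : y \notin X by rewrite mX eqxx /= !andbF.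
have xY : x \notin Y by rewrite mY eqxx /= !andbF.
have yY : y \notin Y by rewrite mY eqxx /= !andbF.
have xM : x \notin M by rewrite mM eqxx /= !andbF.
have yM : y \notin M by rewrite mM eqxx /= !andbF.
have nM_X v : v \in M -> v \in X -> False.
  by rewrite mM mX => /and5P[_ _ _ /negbTE -> _]; rewrite !andbF.
have nM_Y v : v \in M -> v \in Y -> False.
  by rewrite mM mY => /and5P[_ _ _ _ /negbTE ->]; rewrite !andbF.
have [p pP hp] := avg_in tT P0.
have [pX pY] : p \in X /\ p \notin Y by move: pP; rewrite mP => /andP[].
have Txp : T x p by move: pX; rewrite mX => /and4P[].
have Typ : T y p.
  move: pX pY; rewrite mX mY => /and4P[pS px py _]; rewrite pS px py /= => nT.
  exact: tour_nT tT py nT.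
have xM1 : x \notin M1 by apply/negP => /M1M; rewrite (negbTE xM).
have yM1 : y \notin M1 by apply/negP => /M1M; rewrite (negbTE yM).
have xP : x \notin P by rewrite mP (negbTE xX).
have yP : y \notin P by rewrite mP (negbTE yX).
have dYM1 : [disjoint Y & M1] by apply/mkdisj => v vY /M1M vM; exact: nM_Y _ vM vY.
have dYP : [disjoint Y & P] by apply/mkdisj => v vY; rewrite mP vY andbF.
have dM1P : [disjoint M1 & P] by apply/mkdisj => v /M1M vM; rewrite mP => /andP[vX _]; exact: nM_X _ vM vX.
have hYp c : c \in Y -> T c p.
  move=> hc; apply: (np3' _ _ pX hc); apply/eqP => e; by rewrite e hc in pY.
have hM1p b : b \in M1 -> T b p by move=> bM; exact: hM1 _ _ bM pX.
have [/subset_leq_card le1 e1] := count_in tT nxy Txp Typ xY yY xM1 yM1 xP yP dYM1 dYP dM1P hYp hM1p.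
rewrite e1 (deg p).2 in le1.
have [q qQ hq] := avg_out tT Q0.
have [qY qX] : q \in Y /\ q \notin X by move: qQ; rewrite mQ => /andP[].
have Tqy : T q y by move: qY; rewrite mY => /and4P[].
have Tqx : T q x.
  move: qY qX; rewrite mX mY => /and4P[qS qx qy _]; rewrite qS qx qy /= => nT.
  by apply: (tour_nT tT _ nT); rewrite eq_sym.
have xM2 : x \notin M2 by apply/negP => /M2M; rewrite (negbTE xM).
have yM2 : y \notin M2 by apply/negP => /M2M; rewrite (negbTE yM).
have xQ : x \notin Q by rewrite mQ (negbTE xY).
have yQ : y \notin Q by rewrite mQ (negbTE yY).
have dXM2 : [disjoint X & M2] by apply/mkdisj => v vX /M2M vM; exact: nM_X _ vM vX.
have dXQ : [disjoint X & Q] by apply/mkdisj => v vX; rewrite mQ vX andbF.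
have dM2Q : [disjoint M2 & Q] by apply/mkdisj => v /M2M vM; rewrite mQ => /andP[vY _]; exact: nM_Y _ vM vY.
have hXq a : a \in X -> T q a.
  move=> ha; apply: (np3' _ _ ha qY); apply/eqP => e; by rewrite -e ha in qX.
have hM2q b : b \in M2 -> T q b by move=> bM; exact: hM2 _ _ bM qY.
have [/subset_leq_card le2 e2] := count_in (tour_flip tT) nxy Tqx Tqy xX yX xM2 yM2 xQ yQ dXM2 dXQ dM2Q hXq hM2q.
move: le2; rewrite e2 /= (deg q).1 => le2.
move: cU cX cY cXY cM cM12 cP cQ I1 hk n5 le1 hp le2 hq.
set a1 := #|U|. set a2 := #|S|. set a3 := #|X|. set a4 := #|Y|. set a5 := #|X :|: Y|.
set a6 := #|X :&: Y|. set a7 := #|M|. set a8 := #|M1|. set a9 := #|M2|. set b1 := #|P|. set b2 := #|Q|.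
set b3 := #|[set q0 in P | T q0 p]|. set b4 := #|[set q0 in Q | T q q0]|.
clear.
lia.
Qed.

Ltac bashv v x y z S T F :=
  let vx := fresh "vx" in let vy := fresh "vy" in let vz := fresh "vz" in
  case: (eqVneq v x) => [->|vx]; [| case: (eqVneq v y) => [->|vy]; [| case: (eqVneq v z) => [->|vz]]];
  rewrite ?eqxx ?F;
  try rewrite (negbTE vx); try rewrite (negbTE vy); try rewrite (negbTE vz); rewrite /=;
  try (case: (v \in S)); try (case: (T x v)); try (case: (T v y)); try by [].

Lemma parti (V : finType) (T : rel V) (n : nat) (S : {set V}) (x y : V) :
  tournament T -> regular T -> #|V| = 2 * n + 1 ->
  x \notin S -> y \notin S -> x != y ->
  3 <= n -> 3 * #|S| <= n - 1 -> ~ isoG T x y S -> path3 T S x y.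
Proof.
move=> tT rT cV xS yS nxy n3 hk niso.
case: (classic (path3 T S x y)) => // np3; exfalso; apply: niso.
have nyx : y != x by rewrite eq_sym.
have deg := deg_n _ tT rT cV.
pose U := [set v | [&& v \notin S, v != x & v != y]].
pose X := [set v in U | T x v].
pose Y := [set v in U | T v y].
have mU v : v \in U = [&& v \notin S, v != x & v != y] by rewrite inE.
have mX v : v \in X = [&& v \notin S, v != x, v != y & T x v] by rewrite !inE -!andbA.
have mY v : v \in Y = [&& v \notin S, v != x, v != y & T v y] by rewrite !inE -!andbA.
have np3' a c : a \in X -> c \in Y -> a != c -> T c a.
  rewrite mX mY => /and4P[aS ax ay Txa] /and4P[cS cx cy Tcy] ac.
  apply: (tour_nT tT ac); apply/negP => Tac; apply: np3; exists a, c; split => //.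
    by rewrite /= !inE !negb_or !(eq_sym x) ax cx nyx ac ay cy.
  by rewrite xS aS cS yS.
pose M := U :\: (X :|: Y).
have mM b : b \in M = [&& b \notin S, b != x, b != y, ~~ T x b & ~~ T b y].
  by rewrite !inE; case: (b \in S); case: (b == x); case: (b == y); case: (T x b); case: (T b y).
have I1 : #|X :&: Y| <= 1.
  apply/card_le1_eqP => u v; rewrite !in_setI => /andP[uX uY] /andP[vX vY].
  case: (eqVneq u v) => // uv; exfalso.
  have h1 := np3' u v uX vY uv.
  have h2 := np3' v u vX uY (negbT (introF eqP (fun e => (negP uv) (introT eqP (esym e))))).
  by move: (tT.1 _ _ h1); rewrite h2.
have cU : #|U| + #|S| + 2 = 2 * n + 1.
  rewrite -cV -cardsT.
  have -> : [set: V] = (U :|: S) :|: [set x; y].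
    apply/setP => v; rewrite !inE.
    by case: (v \in S); case: (eqVneq v x); case: (eqVneq v y).
  rewrite disjU; last first.
    apply/mkdisj => v; rewrite !inE => /orP[/and3P[_ vx vy]|vS] /orP[/eqP e|/eqP e]; subst v.
    - by rewrite eqxx in vx.
    - by rewrite eqxx in vy.
    - by rewrite vS in xS.
    - by rewrite vS in yS.
  rewrite disjU; last first.
    by apply/mkdisj => v; rewrite !inE => /and3P[vS _ _]; rewrite (negbTE vS).
  by rewrite cards2 nxy.
have cardU_le (A B : {set V}) : #|A :|: B| <= #|A| + #|B| by rewrite cardsU; lia.
have cX : n <= #|X| + #|S| + 1.
  rewrite -{1}(deg x).1.
  apply: (leq_trans (subset_leq_card (_ : _ \subset X :|: S :|: [set y]))).
    apply/subsetP => v; rewrite !inE => Txv.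
    case: (eqVneq v y) => vy; first by rewrite orbT.
    case: (eqVneq v x) => vx; first by subst v; rewrite tour_irr in Txv.
    by case: (v \in S); rewrite ?orbT //= Txv.
  by apply: (leq_trans (cardU_le _ _)); rewrite cards1 leq_add2r cardU_le.
have cY : n <= #|Y| + #|S| + 1.
  rewrite -{1}(deg y).2.
  apply: (leq_trans (subset_leq_card (_ : _ \subset Y :|: S :|: [set x]))).
    apply/subsetP => v; rewrite !inE => Tvy.
    case: (eqVneq v x) => vx; first by rewrite orbT.
    case: (eqVneq v y) => vy; first by subst v; rewrite tour_irr in Tvy.
    by case: (v \in S); rewrite ?orbT //= Tvy.
  by apply: (leq_trans (cardU_le _ _)); rewrite cards1 leq_add2r cardU_le.
have cXY := cardsUI X Y.
have XYU : X :|: Y \subset U.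
  by apply/subsetP => v; rewrite !inE => /orP[/andP[-> _]|/andP[-> _]].
have cM : #|M| + #|X :|: Y| = #|U|.
  by rewrite -(cardsID (X :|: Y) U) (setIidPr XYU) addnC.
pose P := X :\: Y. pose Q := Y :\: X.
have cP : #|X :&: Y| + #|P| = #|X| by rewrite cardsID.
have cQ : #|X :&: Y| + #|Q| = #|Y| by rewrite setIC cardsID.
have mP v : v \in P = (v \in X) && (v \notin Y) by rewrite in_setD andbC.
have mQ v : v \in Q = (v \in Y) && (v \notin X) by rewrite in_setD andbC.
have xX : x \notin X by rewrite mX eqxx /= !andbF.
have yX : y \notin X by rewrite mX eqxx /= !andbF.
have xY : x \notin Y by rewrite mY eqxx /= !andbF.
have yY : y \notin Y by rewrite mY eqxx /= !andbF.
have xM : x \notin M by rewrite mM eqxx /= !andbF.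
have yM : y \notin M by rewrite mM eqxx /= !andbF.
have xP : x \notin P by rewrite mP (negbTE xX).
have yP : y \notin P by rewrite mP (negbTE yX).
have xQ : x \notin Q by rewrite mQ (negbTE xY).
have yQ : y \notin Q by rewrite mQ (negbTE yY).
have x0 : x \notin (set0 : {set V}) by rewrite inE.
have y0 : y \notin (set0 : {set V}) by rewrite inE.
have dY0 : [disjoint Y & (set0 : {set V})] by apply/mkdisj => v _; rewrite inE.
have d0P : [disjoint (set0 : {set V}) & P] by apply/mkdisj => v; rewrite inE.
have dX0 : [disjoint X & (set0 : {set V})] by apply/mkdisj => v _; rewrite inE.
have d0Q : [disjoint (set0 : {set V}) & Q] by apply/mkdisj => v; rewrite inE.
have dYP : [disjoint Y & P] by apply/mkdisj => v vY; rewrite mP vY andbF.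
have dXQ : [disjoint X & Q] by apply/mkdisj => v vX; rewrite mQ vX andbF.
have h0 (w : V) : forall b, b \in (set0 : {set V}) -> T b w by move=> b; rewrite inE.
have h0' (w : V) : forall b, b \in (set0 : {set V}) -> T w b by move=> b; rewrite inE.
have cntP p : p \in P ->
  ([set x; y] :|: Y :|: set0 :|: [set q in P | T q p]) \subset [set w | T w p] /\
  #|[set x; y] :|: Y :|: set0 :|: [set q in P | T q p]| = 2 + #|Y| + #|(set0 : {set V})| + #|[set q in P | T q p]|.
  move=> pP.
  have [pX pY] : p \in X /\ p \notin Y by move: pP; rewrite mP => /andP[].
  have Txp : T x p by move: pX; rewrite mX => /and4P[].
  have Typ : T y p.
    move: pX pY; rewrite mX mY => /and4P[pS px py _]; rewrite pS px py /= => nT.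
    exact: tour_nT tT py nT.
  have hYp c : c \in Y -> T c p.
    move=> hc; apply: (np3' _ _ pX hc); apply/eqP => e; by rewrite e hc in pY.
  exact: count_in tT nxy Txp Typ xY yY x0 y0 xP yP dY0 dYP d0P hYp (h0 p).
have cntQ q : q \in Q ->
  ([set x; y] :|: X :|: set0 :|: [set q' in Q | T q q']) \subset [set w | T q w] /\
  #|[set x; y] :|: X :|: set0 :|: [set q' in Q | T q q']| = 2 + #|X| + #|(set0 : {set V})| + #|[set q' in Q | T q q']|.
  move=> qQ.
  have [qY qX] : q \in Y /\ q \notin X by move: qQ; rewrite mQ => /andP[].
  have Tqy : T q y by move: qY; rewrite mY => /and4P[].
  have Tqx : T q x.
    move: qY qX; rewrite mX mY => /and4P[qS qx qy _]; rewrite qS qx qy /= => nT.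
    by apply: (tour_nT tT _ nT); rewrite eq_sym.
  have hXq a : a \in X -> T q a.
    move=> ha; apply: (np3' _ _ ha qY); apply/eqP => e; by rewrite -e ha in qX.
  exact: (count_in (tour_flip tT) nxy Tqx Tqy xX yX x0 y0 xQ yQ dX0 dXQ d0Q hXq (h0' q)).
have cP' p : p \in P -> 2 + #|Y| + #|[set q in P | T q p]| <= n.
  move=> pP; have [/subset_leq_card le e] := cntP p pP.
  by move: le; rewrite e (deg p).2 cards0 addn0.
have cQ' q : q \in Q -> 2 + #|X| + #|[set q' in Q | T q q']| <= n.
  move=> qQ; have [/subset_leq_card le e] := cntQ q qQ.
  by move: le; rewrite e (deg q).1 cards0 addn0.
have P0 : 0 < #|P|.
  move: cX I1 cP hk n3; set a3 := #|X|; set a6 := #|X :&: Y|; set b1 := #|P|; set a2 := #|S|; clear; lia.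
have Q0 : 0 < #|Q|.
  move: cY I1 cQ hk n3; set a3 := #|Y|; set a6 := #|X :&: Y|; set b1 := #|Q|; set a2 := #|S|; clear; lia.
have [p pP hp] := avg_in tT P0.
have [q qQ hq] := avg_out tT Q0.
have le1 := cP' p pP.
have le2 := cQ' q qQ.
case/orP: (tT.2 _ _ nxy) => [Txy|Tyx]; last first.
  have cX2 : n <= #|X| + #|S|.
    rewrite -{1}(deg x).1.
    apply: (leq_trans (subset_leq_card (_ : _ \subset X :|: S))); last exact: cardU_le.
    apply/subsetP => v; rewrite !inE => Txv.
    case: (eqVneq v y) => vy; first by subst v; move: (tT.1 _ _ Tyx); rewrite Txv.
    case: (eqVneq v x) => vx; first by subst v; rewrite tour_irr in Txv.
    by case: (v \in S); rewrite ?orbT //= Txv.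
  have cY2 : n <= #|Y| + #|S|.
    rewrite -{1}(deg y).2.
    apply: (leq_trans (subset_leq_card (_ : _ \subset Y :|: S))); last exact: cardU_le.
    apply/subsetP => v; rewrite !inE => Tvy.
    case: (eqVneq v x) => vx; first by subst v; move: (tT.1 _ _ Tyx); rewrite Tvy.
    case: (eqVneq v y) => vy; first by subst v; rewrite tour_irr in Tvy.
    by case: (v \in S); rewrite ?orbT //= Tvy.
  move: cX2 cY2 I1 cP cQ hk n3 le1 le2 hp hq.
  set a3 := #|X|; set a4 := #|Y|; set a6 := #|X :&: Y|; set b1 := #|P|; set b2 := #|Q|; set a2 := #|S|.
  set b3 := #|[set q0 in P | T q0 p]|. set b4 := #|[set q0 in Q | T q q0]|.
  clear; lia.
have [ek [eX [eY ei]]] : 3 * #|S| + 1 = n /\ #|X| = 2 * #|S| /\ #|Y| = 2 * #|S| /\ #|X :&: Y| = 1.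
  move: cX cY I1 cP cQ hk n3 le1 le2 hp hq.
  set a3 := #|X|; set a4 := #|Y|; set a6 := #|X :&: Y|; set b1 := #|P|; set b2 := #|Q|; set a2 := #|S|.
  set b3 := #|[set q0 in P | T q0 p]|. set b4 := #|[set q0 in Q | T q q0]|.
  clear; lia.
set k := #|S| in ek eX eY hk.
have k1 : 1 <= k by move: ek n3; clear; lia.
have cPk : #|P| = 2 * (k - 1) + 1 by move: cP eX ei k1; clear; lia.
have cQk : #|Q| = 2 * (k - 1) + 1 by move: cQ eY ei k1; clear; lia.
have tP : forall p0, p0 \in P -> #|[set q0 in P | T q0 p0]| = k - 1.
  apply: (tight_in tT cPk) => p0 p0P; have := cP' p0 p0P; rewrite eY -ek.
  set c := #|_|; clear; lia.
have tQ : forall q0, q0 \in Q -> #|[set q' in Q | T q0 q']| = k - 1.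
  apply: (tight_out tT cQk) => q0 q0Q; have := cQ' q0 q0Q; rewrite eX -ek.
  set c := #|_|; clear; lia.
have exP u v : u \in P -> v != x -> v != y -> v \notin Y -> v \notin P -> v != u -> T u v.
  move=> uP vx vy vY vP vu; apply: (tour_nT tT vu); apply/negP => Tvu.
  have [sub e] := cntP u uP.
  have eqD : [set x; y] :|: Y :|: set0 :|: [set q in P | T q u] = [set w | T w u].
    apply/eqP; rewrite eqEcard sub /= e (deg u).2 cards0 tP // eY -ek.
    by move: k1; clear; lia.
  have : v \in [set w | T w u] by rewrite inE.
  rewrite -eqD !in_setU !in_set1 in_set0 (negbTE vx) (negbTE vy) (negbTE vY) /= in_set.
  by rewrite (negbTE vP).
have exQ u v : u \in Q -> v != x -> v != y -> v \notin X -> v \notin Q -> v != u -> T v u.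
  move=> uQ vx vy vX vQ vu; apply: (tour_nT tT (_ : u != v)); last first.
    apply/negP => Tuv.
    have [sub e] := cntQ u uQ.
    have eqD : [set x; y] :|: X :|: set0 :|: [set q' in Q | T u q'] = [set w | T u w].
      apply/eqP; rewrite eqEcard sub /= e (deg u).1 cards0 tQ // eX -ek.
      by move: k1; clear; lia.
    have : v \in [set w | T u w] by rewrite inE.
    rewrite -eqD !in_setU !in_set1 in_set0 (negbTE vx) (negbTE vy) (negbTE vX) /= in_set.
    by rewrite (negbTE vQ).
  by rewrite eq_sym.
have Sx s : s \in S -> T x s.
  move=> sS; apply/negPn/negP => nT.
  have : n <= #|X| + #|S :\ s| + 1.
    rewrite -{1}(deg x).1.
    apply: (leq_trans (subset_leq_card (_ : _ \subset X :|: (S :\ s) :|: [set y]))).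
      apply/subsetP => v; rewrite in_set => Txv; rewrite !in_setU !in_set1 in_setD1.
      case: (eqVneq v y) => vy; first by rewrite orbT.
      case: (eqVneq v x) => vx; first by subst v; rewrite tour_irr in Txv.
      case: (eqVneq v s) => vs; first by subst v; rewrite Txv in nT.
      case vS: (v \in S); rewrite ?orbT //= mX vS vx vy Txv //.
    by apply: (leq_trans (cardU_le _ _)); rewrite cards1 leq_add2r cardU_le.
  have := cardsD1 s S; rewrite sS eX -ek; fold k.
  by set c := #|S :\ s|; move: k1; clear; lia.
have Sy s : s \in S -> T s y.
  move=> sS; apply/negPn/negP => nT.
  have : n <= #|Y| + #|S :\ s| + 1.
    rewrite -{1}(deg y).2.
    apply: (leq_trans (subset_leq_card (_ : _ \subset Y :|: (S :\ s) :|: [set x]))).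
      apply/subsetP => v; rewrite in_set => Tvy; rewrite !in_setU !in_set1 in_setD1.
      case: (eqVneq v x) => vx; first by rewrite orbT.
      case: (eqVneq v y) => vy; first by subst v; rewrite tour_irr in Tvy.
      case: (eqVneq v s) => vs; first by subst v; rewrite Tvy in nT.
      case vS: (v \in S); rewrite ?orbT //= mY vS vx vy Tvy //.
    by apply: (leq_trans (cardU_le _ _)); rewrite cards1 leq_add2r cardU_le.
  have := cardsD1 s S; rewrite sS eY -ek; fold k.
  by set c := #|S :\ s|; move: k1; clear; lia.
have [z ez] : exists z, X :&: Y = [set z] by apply/cards1P; rewrite ei.
have [zX zY] : z \in X /\ z \in Y.
  by move: (set11 z); rewrite -ez in_setI => /andP[].
have [zS zx zy Txz] : [/\ z \notin S, z != x, z != y & T x z] by move: zX; rewrite mX => /and4P[].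
have Tzy : T z y by move: zY; rewrite mY => /and4P[].
have xSf : (x \in S) = false by apply: negbTE.
have ySf : (y \in S) = false by apply: negbTE.
have zSf : (z \in S) = false by apply: negbTE.
have nxyf : (x == y) = false by apply: negbTE.
have nyxf : (y == x) = false by apply: negbTE.
have zxf : (z == x) = false by apply: negbTE.
have xzf : (x == z) = false by rewrite eq_sym; apply: negbTE.
have zyf : (z == y) = false by apply: negbTE.
have yzf : (y == z) = false by rewrite eq_sym; apply: negbTE.
have Txx : T x x = false by rewrite tour_irr.
have Tyy : T y y = false by rewrite tour_irr.
have F := (xSf, ySf, zSf, nxyf, nyxf, zxf, xzf, zyf, yzf, Txx, Tyy, Txy, Txz, Tzy).
have mP' v : v \in P = [&& v \notin S, v != x, v != y, T x v & ~~ T v y].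
  by rewrite mP mX mY; case: (v \in S); case: (v == x); case: (v == y); case: (T x v); case: (T v y).
have mQ' v : v \in Q = [&& v \notin S, v != x, v != y, ~~ T x v & T v y].
  by rewrite mQ mX mY; case: (v \in S); case: (v == x); case: (v == y); case: (T x v); case: (T v y).
have XYz v : v \in X -> v \in Y -> v = z.
  by move=> vX vY; apply/set1P; rewrite -ez in_setI vX vY.
have noXY v : v \notin S -> v != x -> v != y -> v != z -> T x v -> T v y -> False.
  move=> vS vx vy vz Txv Tvy; move/eqP: vz; apply; apply: XYz.
    by rewrite mX vS vx vy Txv.
  by rewrite mY vS vx vy Tvy.
have cPk' : #|P| = (2 * k).-1 by rewrite cPk; move: k1; clear; lia.
have cQk' : #|Q| = (2 * k).-1 by rewrite cQk; move: k1; clear; lia.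
have cMk : #|M| = k + 2.
  move: cM cXY cU eX eY ei ek; rewrite -/k.
  set a1 := #|U|; set a3 := #|X|; set a4 := #|Y|; set a5 := #|X :|: Y|; set a6 := #|X :&: Y|; set a7 := #|M|.
  clear; lia.
have MSf v : v \in M :|: S -> [/\ v != x, v != y, v \notin X & v \notin Y].
  rewrite in_setU mM mX mY => /orP[/and5P[vS vx vy nx ny]|vS].
    by rewrite vS vx vy (negbTE nx) (negbTE ny) !andbF.
  by rewrite vS /=; split => //; apply/eqP => e; subst v; [rewrite vS in xS | rewrite vS in yS].
have Pf v : v \in P -> v \in X /\ v \notin Y by rewrite mP => /andP[].
have Pa v : v \in P -> [/\ v \notin S, v != x, v != y, T x v & ~~ T v y] by rewrite mP' => /and5P.
have Qf v : v \in Q -> v \in Y /\ v \notin X by rewrite mQ => /andP[].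
have Qa v : v \in Q -> [/\ v \notin S, v != x, v != y, ~~ T x v & T v y] by rewrite mQ' => /and5P.
have neqXY u v : u \in X -> v \notin X -> u != v.
  by move=> uX vX; apply/eqP => e; subst u; rewrite uX in vX.
have neqY u v : u \in Y -> v \notin Y -> u != v.
  by move=> uX vX; apply/eqP => e; subst u; rewrite uX in vX.
have dPMS : dom T P (M :|: S).
  move=> u v uP /MSf[vx vy vX vY]; apply: exP => //.
    by rewrite mP (negbTE vX).
  by rewrite eq_sym; apply: neqXY vX; case: (Pf u uP).
have dMSQ : dom T (M :|: S) Q.
  move=> u v /MSf[ux uy uX uY] vQ; apply: exQ => //.
    by rewrite mQ (negbTE uY).
  by rewrite eq_sym; apply: neqY uY; case: (Qf v vQ).
have dQP : dom T Q P.
  move=> u v /Qf[uY uX] /Pf[vX _]; apply: np3' => //.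
  by apply: neqXY uX.
have dQz : dom T Q [set z].
  move=> u v /Qf[uY uX] /set1P ->; apply: np3' => //.
  by apply: neqXY uX.
have dzP : dom T [set z] P.
  move=> u v /set1P -> /Pf[vX vY]; apply: np3' => //.
  by rewrite eq_sym; apply/eqP => e; subst v; rewrite zY in vY.
have dx : dom T [set x] ([set y; z] :|: P :|: S).
  move=> u v /set1P ->; rewrite !in_setU !in_set1 -!orbA => /or4P[/eqP->|/eqP->|/Pa[_ _ _ ->]|/Sx] //.
have dy : dom T ([set x; z] :|: Q :|: S) [set y].
  move=> u v hu /set1P ->; move: hu.
  by rewrite !in_setU !in_set1 -!orbA => /or4P[/eqP->|/eqP->|/Qa[_ _ _ _ ->]|/Sy].
have dyPM : dom T [set y] (P :|: M).
  move=> u v /set1P ->; rewrite in_setU => /orP[/Pa[_ _ vy _ nT]|].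
    exact: (tour_nT tT vy nT).
  by rewrite mM => /and5P[_ _ vy _ nT]; exact: (tour_nT tT vy nT).
have dMQx : dom T (M :|: Q) [set x].
  move=> u v hu /set1P ->; move: hu; rewrite in_setU => /orP[|/Qa[_ ux _ nT _]].
    by rewrite mM => /and5P[_ ux _ nT _]; apply: (tour_nT tT _ nT); rewrite eq_sym.
  by apply: (tour_nT tT _ nT); rewrite eq_sym.

exists V, T, x, y, S, (fun v => v); split => //.
  by exists id.
  by split => //; rewrite imset_id.
exists z, P, M, Q, k; split => //.
- by split=> //; rewrite cV -ek; clear; lia.
- split.
  + by rewrite /= !inE negb_or nxyf xzf yzf.
  + apply/mkdisj => v; rewrite !in_setU !in_set1 mP' mM mQ'.
    bashv v x y z S T F.
  + split; apply/mkdisj => v; rewrite ?in_setU ?mP' ?mM ?mQ'; bashv v x y z S T F.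
  + apply/setP => v; rewrite !in_setU !in_set1 mP' mM mQ' in_setT.
    have : ~~ [&& v \notin S, v != x, v != y, v != z, T x v & T v y].
      by apply/negP => /and5P[? ? ? ? /andP[? ?]]; apply: (noXY v).
    bashv v x y z S T F.
- split; first by split.
  split.
  + move=> v vP; have := split_in_out P v tT; have e := cardsD1 v P; rewrite vP in e.
    rewrite tP //; move: e cPk; set c := #|_ :\ _|; set d := #|[set w in P | T v w]|.
    clear; lia.
  + move=> v vQ; have := split_in_out Q v tT; have e := cardsD1 v Q; rewrite vQ in e.
    rewrite tQ //; move: e cQk; set c := #|_ :\ _|; set d := #|[set w in Q | T w v]|.
    clear; lia.
  + move=> w wZ.
    set Z := z |: (M :|: S) in wZ *.
    have zMS : z \notin M :|: S by rewrite in_setU mM zSf Txz /= !andbF.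
    have cZ : #|Z| = 2 * k + 3.
      rewrite /Z cardsU1 zMS disjU ?cMk; first by clear; lia.
      by apply/mkdisj => v; rewrite mM => /and5P[vS _ _ _ _]; rewrite (negbTE vS).
    have PZ v : v \in P -> v \notin Z.
      move=> vP; have [vX vY] := Pf v vP; have [vS _ _ Txv _] := Pa v vP.
      apply/negP; rewrite /Z in_setU1 in_setU mM (negbTE vS) Txv /= ?andbF ?orbF => /eqP e.
      by subst v; rewrite zY in vY.
    have QZ v : v \in Q -> v \notin Z.
      move=> vQ; have [vY vX] := Qf v vQ; have [vS _ _ _ Tvy] := Qa v vQ.
      apply/negP; rewrite /Z in_setU1 in_setU mM (negbTE vS) Tvy /= ?andbF ?orbF => /eqP e.
      by subst v; rewrite zX in vX.
    have xZ : x \notin Z by rewrite /Z in_setU1 in_setU xzf (negbTE xM) xSf.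
    have yZ : y \notin Z by rewrite /Z in_setU1 in_setU yzf (negbTE yM) ySf.
    have cyP : #|y |: P| = 2 * k by rewrite cardsU1 yP cPk; move: k1; clear; lia.
    have cxP : #|x |: P| = 2 * k by rewrite cardsU1 xP cPk; move: k1; clear; lia.
    have cyQ : #|y |: Q| = 2 * k by rewrite cardsU1 yQ cQk; move: k1; clear; lia.
    have cxQ : #|x |: Q| = 2 * k by rewrite cardsU1 xQ cQk; move: k1; clear; lia.
    have [o1 o2] : 2 * k <= #|[set v | T w v] :\: Z| /\ 2 * k <= #|[set v | T v w] :\: Z|.
      move: wZ; rewrite /Z in_setU1 in_setU => /orP[/eqP->|/orP[wM|wS]].
      - rewrite -{1}cyP -cxQ; split; apply: subset_leq_card; apply/subsetP => v;
          rewrite in_setU1 => /orP[/eqP->|vPQ]; rewrite in_setD in_set.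
        + by rewrite yZ Tzy.
        + by rewrite PZ //; apply: dzP => //; rewrite in_set1.
        + by rewrite xZ Txz.
        + by rewrite QZ //; apply: dQz => //; rewrite in_set1.
      - rewrite -{1}cxQ -cyP; split; apply: subset_leq_card; apply/subsetP => v;
          rewrite in_setU1 => /orP[/eqP->|vPQ]; rewrite in_setD in_set.
        + by rewrite xZ; apply: dMQx; rewrite ?in_setU ?wM ?in_set1.
        + by rewrite QZ //; apply: dMSQ; rewrite ?in_setU ?wM.
        + by rewrite yZ; apply: dyPM; rewrite ?in_setU ?wM ?in_set1 ?orbT.
        + by rewrite PZ //; apply: dPMS; rewrite ?in_setU ?wM.
      - rewrite -{1}cyQ -cxP; split; apply: subset_leq_card; apply/subsetP => v;
          rewrite in_setU1 => /orP[/eqP->|vPQ]; rewrite in_setD in_set.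
        + by rewrite yZ; apply: Sy.
        + by rewrite QZ //; apply: dMSQ; rewrite ?in_setU ?wS ?orbT.
        + by rewrite xZ; apply: Sx.
        + by rewrite PZ //; apply: dPMS; rewrite ?in_setU ?wS ?orbT.
    have e_o := cardsID Z [set v | T w v]; have e_i := cardsID Z [set v | T v w].
    rewrite (deg w).1 in e_o; rewrite (deg w).2 in e_i.
    have eo : [set v in Z | T w v] = [set v | T w v] :&: Z.
      by apply/setP => v; rewrite in_setI [in LHS]in_set [in RHS]in_set andbC.
    have ei' : [set v in Z | T v w] = [set v | T v w] :&: Z.
      by apply/setP => v; rewrite in_setI [in LHS]in_set [in RHS]in_set andbC.
    have sp := split_in_out Z w tT; have cd := cardsD1 w Z; rewrite wZ in cd.
    rewrite eo ei' in sp *; move: o1 o2 e_o e_i sp cd cZ ek.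
    set c1 := #|[set v | T w v] :\: Z|; set c2 := #|[set v | T v w] :\: Z|.
    set c3 := #|[set v | T w v] :&: Z|; set c4 := #|[set v | T v w] :&: Z|.
    set c5 := #|Z :\ w|; set c6 := #|Z|.
    clear; lia.
Qed.


Theorem lemma3p2 (V : finType) (T : rel V) (n : nat) (S : {set V}) (x y : V) :
  tournament T -> regular T -> #|V| = 2 * n + 1 ->
  x \notin S -> y \notin S -> x != y ->
  (3 <= n -> 3 * #|S| <= n - 1 -> ~ isoG T x y S -> path3 T S x y) /\
  (5 <= n -> 2 * #|S| <= n -> ~ path3 T S x y -> path4 T S x y).
Proof.
move=> tT rT cV xS yS nxy; split.
  exact: parti.
exact: partii.
Qed.
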